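(* For a positive integer $k$, let $N(k)$ be the maximum length $N$ of an $\mathbb{R}$-Sidon sequence $(m_n)_{n=1}^N$ with all elements in $[1,k]$. Then $$\limsup_{k\to\infty}\frac{N(k)}{\sqrt{k}}\le 1.$$
   Context: A finite sequence of real numbers $(m_n)_{n=1}^N$ is an $\mathbb{R}$-Sidon sequence if $|(m_{n_1}+m_{n_2})-(m_n+m_{n_3})|\ge1$ for all $n_1,n_2,n,n_3\in\{1,\ldots,N\}$ with $(n_1,n_2)\ne(n,n_3)$ and $(n_1,n_2)\ne(n_3,n)$. *)

(* Defs.v *)
From Stdlib Require Import Reals Lra Lia.
Open Scope R_scope.

(* A finite real sequence (m_n)_{n=1}^N is represented by m : nat -> R,
   only the values at indices 1..N being relevant. *)
Definition R_Sidon (N : nat) (m : nat -> R) : Prop :=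
  forall n1 n2 n n3 : nat,
    (1 <= n1 <= N)%nat -> (1 <= n2 <= N)%nat ->
    (1 <= n <= N)%nat -> (1 <= n3 <= N)%nat ->
    (n1, n2) <> (n, n3) -> (n1, n2) <> (n3, n) ->
    Rabs ((m n1 + m n2) - (m n + m n3)) >= 1.

Definition in_range (k : nat) (N : nat) (m : nat -> R) : Prop :=
  forall i : nat, (1 <= i <= N)%nat -> 1 <= m i <= INR k.

Definition Sidon_in (k N : nat) : Prop :=
  exists m : nat -> R, R_Sidon N m /\ in_range k N m.

Definition is_max_Sidon_length (k Nk : nat) : Prop :=
  Sidon_in k Nk /\ (forall N : nat, Sidon_in k N -> (N <= Nk)%nat).

(* Main.v *)
Require Import Defs.
From Stdlib Require Import Reals Lra Lia ZArith.
From mathcomp Require Import all_boot zify.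
Set Implicit Arguments. Unset Strict Implicit.
Local Open Scope nat_scope.

Lemma count_int M lo hi : \sum_(s < M) (lo <= s < hi) = minn M hi - lo.
Proof.
elim: M => [|M IH]; first by rewrite big_ord0; lia.
rewrite big_ord_recr /= IH.
case: (boolP (lo <= M < hi)) => /= H; lia.
Qed.

Lemma cs M (a : nat -> nat) :
  (\sum_(s < M) a s) ^ 2 <= M * \sum_(s < M) a s ^ 2.
Proof.
elim: M => [|M IH]; first by rewrite !big_ord0.
rewrite !big_ord_recr /=.
set S := \sum_(i < M) a i in IH *; set Q := \sum_(i < M) a i ^ 2 in IH *.
set x := a M.
have H2 : M * (2 * S * x) <= M * (Q + M * x ^ 2).
  have : 2 * M * S * x <= S ^ 2 + M ^ 2 * x ^ 2.
    case: (leqP S (M * x)) => h.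
      have := leqnn ((M * x - S) ^ 2). nia.
    have := leqnn ((S - M * x) ^ 2). nia.
  nia.
case: (posnP M) => HM.
  have -> : S = 0 by rewrite HM in IH; nia.
  nia.
have H3 : 2 * S * x <= Q + M * x ^ 2 by rewrite leq_pmul2l in H2.
nia.
Qed.

Lemma ov_bound M u a b :
  \sum_(s < M) ((a <= s < a + u) && (b <= s < b + u)) <= u - ((a - b) + (b - a)).
Proof.
apply: (@leq_trans (\sum_(s < M) (maxn a b <= s < minn a b + u))).
  apply: leq_sum => s _.
  case: (boolP ((a <= s < a + u) && (b <= s < b + u))) => //= H.
  have -> : (maxn a b <= s < minn a b + u) = true by lia. by [].
rewrite count_int; lia.
Qed.

Lemma pairs_card N t (f : 'I_N -> 'I_N -> nat) (o : 'I_N -> 'I_N -> bool) :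
  (forall i j a b, i != j -> a != b -> f i j = f a b -> o i j = o a b -> (i, j) = (a, b)) ->
  #|[set p : 'I_N * 'I_N | (p.1 != p.2) && (f p.1 p.2 <= t)]| <= 2 * t.+1.
Proof.
move=> Hinj.
set A := [set p : 'I_N * 'I_N | _].
pose g (p : 'I_N * 'I_N) := ((inord (f p.1 p.2) : 'I_t.+1), o p.1 p.2).
rewrite -(card_in_imset (f := g)).
  apply: leq_trans (max_card _) _.
  by rewrite card_prod card_ord card_bool mulnC.
move=> [i j] [a b]; rewrite !inE /= => /andP [Hij Hf1] /andP [Hab Hf2].
rewrite /g /= => [[E1 E2]].
apply: Hinj => //.
have := congr1 val E1; rewrite /= !inordK //; lia.
Qed.

Lemma comb (N k u : nat) (c : 'I_N -> nat) (f : 'I_N -> 'I_N -> nat) (o : 'I_N -> 'I_N -> bool) :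
  (forall i, c i < k) ->
  (forall i j, f i j <= (c i - c j) + (c j - c i)) ->
  (forall i j a b, i != j -> a != b -> f i j = f a b -> o i j = o a b -> (i, j) = (a, b)) ->
  0 < u -> N * N * u <= (k + u - 1) * (N + u + 1).
Proof.
move=> Hc Hf Hinj Hu.
set M := k + u - 1.
pose a s := \sum_(i < N) (c i <= s < c i + u).
have HS : \sum_(s < M) a s = N * u.
  rewrite /a exchange_big /=.
  rewrite (eq_bigr (fun _ => u)); first by rewrite sum_nat_const card_ord.
  move=> i _; rewrite count_int; have := Hc i; lia.
have HQ : \sum_(s < M) a s ^ 2 <= N * u + u * u.+1.
  have E : \sum_(s < M) a s ^ 2 = \sum_(i < N) \sum_(j < N)
     \sum_(s < M) ((c i <= s < c i + u) && (c j <= s < c j + u)).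
    rewrite exchange_big /=.
    under [RHS]eq_bigr do rewrite exchange_big.
    rewrite /= exchange_big /=.
    apply: eq_bigr => s _; rewrite /a expnS expn1 big_distrl /=.
    apply: eq_bigr => i _; rewrite big_distrr /=.
    apply: eq_bigr => j _; by case: (c i <= s < c i + u); case: (c j <= s < c j + u).
  rewrite E.
  apply: (@leq_trans (\sum_(i < N) \sum_(j < N) (if i == j then u else (i != j) * (u - f i j)))).
    apply: leq_sum => i _; apply: leq_sum => j _.
    apply: leq_trans (ov_bound _ _ _ _) _.
    case: eqP => [->|/eqP ne]; first lia.
    rewrite /= mul1n. have := Hf i j; lia.
  have E2 : forall i, \sum_(j < N) (if i == j then u else (i != j) * (u - f i j)) =
       u + \sum_(j < N) (i != j) * (u - f i j).
    move=> i; rewrite (bigD1 i) //= eqxx; congr (_ + _).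
    rewrite [RHS](bigD1 i) //= eqxx mul0n add0n.
    by apply: eq_bigr => j /negbTE; rewrite eq_sym => ->.
  rewrite (eq_bigr _ (fun i _ => E2 i)) big_split /= sum_nat_const card_ord.
  rewrite leq_add2l.
  have E3 : \sum_(i < N) \sum_(j < N) (i != j) * (u - f i j) =
     \sum_(t < u) #|[set p : 'I_N * 'I_N | (p.1 != p.2) && (f p.1 p.2 <= t)]|.
    have E4 : forall i j, (i != j) * (u - f i j) = \sum_(t < u) ((i != j) && (f i j <= t)).
      move=> i j; case: (i != j); last by rewrite mul0n big1.
      rewrite mul1n. have -> : \sum_(t < u) (true && (f i j <= t)) = \sum_(t < u) (f i j <= t < u) by apply: eq_bigr => t _; rewrite (ltn_ord t) andbT.
      rewrite count_int; lia.
    under eq_bigr do under eq_bigr do rewrite E4.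
    under eq_bigr do rewrite exchange_big.
    rewrite exchange_big /=; apply: eq_bigr => t _.
    rewrite pair_bigA /= -sum1dep_card [RHS]big_mkcond /=.
    by apply: eq_bigr => p _; case: (_ && _).
  rewrite E3.
  apply: (@leq_trans (\sum_(t < u) 2 * t.+1)).
    apply: leq_sum => t _; exact: (pairs_card t Hinj).
  elim: (u) => [|v IH]; first by rewrite big_ord0.
  rewrite big_ord_recr /=. apply: leq_trans (leq_add IH (leqnn _)) _; lia.
have := cs M a. rewrite HS => H.
have : u * (N * N * u) <= u * (M * (N + u + 1)).
  apply: (leq_trans _ (leq_trans H _)); first lia.
  apply: leq_trans (leq_mul (leqnn M) HQ) _. lia.
by rewrite leq_pmul2l.
Qed.
Local Open Scope R_scope.

Definition fl (r : R) : Z := (up r - 1)%Z.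

Lemma fl_spec r : IZR (fl r) <= r < IZR (fl r) + 1.
Proof. rewrite /fl minus_IZR; have := archimed r; lra. Qed.

Lemma fl_le_diff x y : y <= x -> (fl (x - y) < fl x - fl y + 1)%Z.
Proof.
move=> H; apply: lt_IZR; rewrite plus_IZR minus_IZR.
have := fl_spec (x - y); have := fl_spec x; have := fl_spec y; lra.
Qed.

Lemma fl_close a b : fl a = fl b -> Rabs (a - b) < 1.
Proof.
move=> E; have := fl_spec a; have := fl_spec b; rewrite E.
move=> H1 H2; apply: Rabs_def1; lra.
Qed.

Lemma fl_nonneg a : 0 <= a -> (0 <= fl a)%Z.
Proof. move=> H; suff : (-1 < fl a)%Z by lia. apply: lt_IZR; have := fl_spec a; lra. Qed.

Lemma core_R (N k u : nat) (m : nat -> R) :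
  R_Sidon N m -> in_range k N m -> (0 < u)%N ->
  (N * N * u <= (k + u - 1) * (N + u + 1))%N.
Proof.
move=> HS Hr Hu.
pose mm (i : 'I_N) := m i.+1.
have Hr' : forall i : 'I_N, 1 <= mm i <= INR k.
  move=> i; apply: Hr; have := ltn_ord i; lia.
apply: (@comb N k u (fun i => Z.to_nat (fl (mm i) - 1))
          (fun i j => Z.to_nat (fl (Rabs (mm i - mm j))))
          (fun i j => if Rle_dec (mm j) (mm i) then true else false)) => //.
- move=> i; have := Hr' i; have := fl_spec (mm i); rewrite INR_IZR_INZ => H1 H2.
  have h1 : (0 < fl (mm i))%Z by apply: lt_IZR; lra.
  have h2 : (fl (mm i) <= Z.of_nat k)%Z by apply: le_IZR; lra.
  apply/ltP; lia.
- move=> i j.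
  have Ai := fl_spec (mm i); have Aj := fl_spec (mm j).
  have Bi : (0 < fl (mm i))%Z by apply: lt_IZR; have := Hr' i; lra.
  have Bj : (0 < fl (mm j))%Z by apply: lt_IZR; have := Hr' j; lra.
  have F0 := fl_nonneg (Rabs_pos (mm i - mm j)).
  case: (Rle_dec (mm j) (mm i)) => h.
    rewrite Rabs_right; last lra.
    have := fl_le_diff h; lia.
  rewrite Rabs_left; last lra.
  have -> : - (mm i - mm j) = mm j - mm i by ring.
  have := @fl_le_diff (mm j) (mm i) ltac:(lra); lia.
- move=> i j a b Hij Hab Hf Ho.
  apply/eqP; apply: contraT => Hne; exfalso.
  have Hne' : ~ (nat_of_ord i = a /\ nat_of_ord j = b).
    move=> [e1 e2]; move/negP: Hne; apply.
    by apply/eqP; congr pair; apply: val_inj.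
  have Hij' : nat_of_ord i <> j by move=> e; move/negP: Hij; apply; apply/eqP; apply: val_inj.
  have Hab' : nat_of_ord a <> b by move=> e; move/negP: Hab; apply; apply/eqP; apply: val_inj.
  have ri := ltn_ord i; have rj := ltn_ord j; have ra := ltn_ord a; have rb := ltn_ord b.
  have F1 := fl_nonneg (Rabs_pos (mm i - mm j)).
  have F2 := fl_nonneg (Rabs_pos (mm a - mm b)).
  have Hfl : fl (Rabs (mm i - mm j)) = fl (Rabs (mm a - mm b)) by lia.
  have Hc := fl_close Hfl.
  move: Ho; case: (Rle_dec (mm j) (mm i)) => h1; case: (Rle_dec (mm b) (mm a)) => h2 // _.
    have Hs : Rabs (m i.+1 + m b.+1 - (m a.+1 + m j.+1)) >= 1.
      apply: HS; try lia; move=> [] *; lia.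
    rewrite /mm in h1 h2 Hc; move: Hc Hs; rewrite (Rabs_right (m i.+1 - _)); last lra.
    rewrite (Rabs_right (m a.+1 - _)); last lra.
    have -> : m i.+1 + m b.+1 - (m a.+1 + m j.+1) = m i.+1 - m j.+1 - (m a.+1 - m b.+1) by ring.
    lra.
  have Hs : Rabs (m j.+1 + m a.+1 - (m b.+1 + m i.+1)) >= 1.
    apply: HS; try lia; move=> [] *; lia.
  rewrite /mm in h1 h2 Hc; move: Hc Hs; rewrite (Rabs_left (m i.+1 - _)); last lra.
  rewrite (Rabs_left (m a.+1 - _)); last lra.
  have -> : m j.+1 + m a.+1 - (m b.+1 + m i.+1) = - (m i.+1 - m j.+1) - - (m a.+1 - m b.+1) by ring.
  lra.
Qed.
Lemma step (x r U A d : R) : 0 < d -> 0 <= x -> 2 <= r -> A*(r-1) <= U <= A*r ->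
  2 <= A * d -> 1 <= d * r -> A <= d * r ->
  x * x * U <= (r * r + U) * (x + U + 1) ->
  x * x <= 2 * d * x * r + (1 + 3 * d) * (r * r).
Proof.
intros Hd Hx Hr [HU1 HU2] HA Hdr HAr H.
assert (HA0 : 0 < A) by nra.
assert (g1 : d * (A * (r - 1)) <= d * U) by (apply Rmult_le_compat_l; lra).
assert (g2 : 2 * (r - 1) <= (A * d) * (r - 1)) by (apply Rmult_le_compat_r; lra).
assert (g3 : d * (A * (r - 1)) = (A * d) * (r - 1)) by ring.
assert (HrU : r <= d * U) by lra.
assert (HU0 : 0 < U) by nra.
assert (h1 : r * x * r <= r * x * (d * U)) by (apply Rmult_le_compat_l; nra).
assert (h2 : U * x * 1 <= U * x * (d * r)) by (apply Rmult_le_compat_l; nra).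
assert (g4 : A * r <= (d * r) * r) by (apply Rmult_le_compat_r; lra).
assert (h3 : U * U <= U * (d * r * r)) by (apply Rmult_le_compat_l; lra).
assert (h4 : r * r * 1 <= r * r * (d * U)) by (apply Rmult_le_compat_l; nra).
assert (g5 : 1 * 2 <= (d * r) * r) by (apply Rmult_le_compat; lra).
assert (h5 : U * 1 <= U * (d * r * r)) by (apply Rmult_le_compat_l; lra).
apply (Rmult_le_reg_r U); [lra|].
nra.
Qed.

Lemma concl (x r e : R) : 0 < e <= 1 -> 0 <= x -> 0 < r ->
  x * x <= 2 * (e/8) * x * r + (1 + 3 * (e/8)) * (r * r) -> x <= (1 + e) * r.
Proof.
intros He Hx Hr H.
destruct (Rle_dec x ((1+e)*r)) as [h|h]; [exact h|exfalso].
set (d := e/8) in *.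
assert (Hd : d = e/8) by reflexivity.
assert (h1 : (1 + e - d) * r < x - d * r) by lra.
assert (h2 : 0 < (1 + e - d) * r) by nra.
assert (h3 : ((1 + e - d) * r) * ((1 + e - d) * r) < (x - d*r) * (x - d*r)) by nra.
assert (h4 : (1 + 3*d + d*d) <= (1 + e - d) * (1 + e - d)) by nra.
nra.
Qed.

Theorem lemma3 (Nf : nat -> nat)
  (HN : forall k : nat, (0 < k)%coq_nat -> is_max_Sidon_length k (Nf k)) :
  forall eps : R, 0 < eps ->
    exists K : nat, forall k : nat, (K <= k)%coq_nat ->
      INR (Nf k) / sqrt (INR k) <= 1 + eps.
Proof.
move=> eps0 Heps0.
pose e := Rmin eps0 1.
have He : 0 < e <= 1 by rewrite /e; split; [apply: Rmin_glb_lt; lra | apply: Rmin_r].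
have Hee : e <= eps0 by apply: Rmin_l.
pose d := e / 8.
have Hd : 0 < d by rewrite /d; lra.
pose A := Z.to_nat (up (2 / d)).
have HA : 2 <= INR A * d.
  have := archimed (2 / d) => [[h1 _]].
  have h2d : 0 < 2 / d by apply: Rdiv_lt_0_compat; lra.
  have h0 : (0 < up (2 / d))%Z by apply: lt_IZR; lra.
  rewrite /A INR_IZR_INZ Z2Nat.id; last lia.
  have e2 : (2 / d) * d = 2 by field; lra.
  rewrite -{1}e2; apply: Rmult_le_compat_r; lra.
have HA0 : 0 < INR A by nra.
pose C := INR A / d + 1 / d + 2.
have HC : 2 <= C.
  have : 0 <= INR A / d by apply: Rlt_le; apply: Rdiv_lt_0_compat.
  have : 0 <= 1 / d by apply: Rlt_le; apply: Rdiv_lt_0_compat; lra.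
  rewrite /C; lra.
exists (Z.to_nat (up (C * C))).
move=> k Hk.
have Hk' : C * C <= INR k.
  have := archimed (C * C) => [[h1 _]].
  apply: Rle_trans (Rlt_le _ _ h1) _.
  have h0 : (0 < up (C * C))%Z by apply: lt_IZR; nra.
  rewrite INR_IZR_INZ; apply: IZR_le; lia.
pose r := sqrt (INR k).
have Hr : C <= r.
  rewrite /r -(sqrt_square C); last lra.
  exact: sqrt_le_1_alt.
have Hrr : r * r = INR k by rewrite /r; apply: sqrt_sqrt; apply: pos_INR.
have kpos : (0 < k)%N.
  apply/ltP; apply: INR_lt; rewrite /=; nra.
have [m [HS Hrange]] := proj1 (HN k (elimT ltP kpos)).
set N := Nf k in HS Hrange *.
pose n := Nat.sqrt k.
have [Hn1 Hn2] := Nat.sqrt_spec' k.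
have Hn1' : INR n * INR n <= r * r by rewrite Hrr -mult_INR; apply: le_INR; exact: Hn1.
have Hn2' : r * r < (INR n + 1) * (INR n + 1).
  rewrite Hrr -S_INR -mult_INR; apply: lt_INR; exact: Hn2.
have Hr0 : 0 <= r by apply: sqrt_pos.
have Hnr : INR n <= r by nra.
have Hrn : r < INR n + 1 by nra.
have Hn0 : (0 < n)%N.
  apply/ltP; apply: INR_lt; rewrite /=; lra.
pose u := (A * n)%N.
have Hu : (0 < u)%N by rewrite /u muln_gt0; apply/andP; split => //; apply/ltP; apply: INR_lt; rewrite /=; lra.
have Hcore := core_R HS Hrange Hu.
have Hcore' : (N * N * u <= (k + u) * (N + u + 1))%coq_nat.
  move: Hcore; lia.
move/le_INR: Hcore'; rewrite !mult_INR !plus_INR /= -Hrr => Hineq.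
have HU : INR A * (r - 1) <= INR u <= INR A * r.
  rewrite /u -multE mult_INR; split; apply: Rmult_le_compat_l; lra.
have Hdr1 : 1 <= d * r.
  have h' : 0 <= INR A / d by apply: Rlt_le; apply: Rdiv_lt_0_compat.
  have h : 1 / d <= r by rewrite /C in Hr; lra. have e1 : (1 / d) * d = 1 by field; lra.
  rewrite -e1 (Rmult_comm d); apply: Rmult_le_compat_r; lra.
have HdrA : INR A <= d * r.
  have h' : 0 <= 1 / d by apply: Rlt_le; apply: Rdiv_lt_0_compat; lra.
  have h : INR A / d <= r by rewrite /C in Hr; lra. have e1 : (INR A / d) * d = INR A by field; lra.
  rewrite -{1}e1 (Rmult_comm d); apply: Rmult_le_compat_r; lra.
have Hineq2 : INR N * INR N * INR u <= (r * r + INR u) * (INR N + INR u + 1).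
  move: Hineq; rewrite /u -multE mult_INR; exact.
have Hst := step Hd (pos_INR N) (Rle_trans _ _ _ HC Hr) HU HA Hdr1 HdrA Hineq2.
have Hx := concl He (pos_INR N) (ltac:(lra) : 0 < r) Hst.
rewrite -/r.
have Hrp : 0 < r by lra.
apply: (Rmult_le_reg_r r) => //.
have Esq : sqrt (r * r) = r by apply: sqrt_square; lra.
rewrite Esq.
have -> : INR N / r * r = INR N by field; lra.
nra.
Qed.
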